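(* Let $k\subseteq K_1\subseteq K_2$ with $K_1/k$ and $K_2/k$ q-finite of unbounded exponent. Then for every $s\in\mathbb{N}^*$ and every $n\in\mathbb{N}$, $U_s^n(K_1/k)\ge U_s^n(K_2/k)$. Moreover $Ilqm(K_1/k)\le Ilqm(K_2/k)$, with equality if $K_2/K_1$ is finite.
   Context: All fields lie in an algebraic closure $\Omega$ of a field $k$ of characteristic $p>0$; all extensions are purely inseparable. $L^{p^{-n}}=\{a\in\Omega:a^{p^n}\in L\}$. A minimal generating set of $K/k$ is $G$ with $K=k(G)$ and $x\notin k(G\setminus\{x\})$ for $x\in G$. $di(K/k)=\sup_n|G_n|$ with $G_n$ a minimal generating set of $(k^{p^{-n}}\cap K)/k$; $K/k$ is q-finite if $di(K/k)<\infty$; unbounded exponent means no $e$ with $K^{p^e}\subseteq k$. For finite $L/k$, $o_s(L/k)=\inf\{m: di(k(L^{p^m})/k)<s\}$. For $K/k$ q-finite of unbounded exponent, $U_s^j(K/k)=j-o_s((k^{p^{-j}}\cap K)/k)$, and $Ilqm(K/k)$ is the least $s\ge1$ with $(U_s^j(K/k))_j$ unbounded. *)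

(* Defs.v *)
From HB Require Import structures.
From mathcomp Require Import all_boot all_order all_algebra.
Set Implicit Arguments. Unset Strict Implicit. Unset Printing Implicit Defensive.
Import Order.TTheory GRing.Theory Num.Theory.
Local Open Scope ring_scope.

Section Defs.
Variable F : fieldType.
Variable p : nat.

Definition psubset (A B : F -> Prop) : Prop := forall x, A x -> B x.

Definition is_subfield (K : F -> Prop) : Prop :=
  [/\ K 0, K 1, (forall x y, K x -> K y -> K (x - y)),
      (forall x y, K x -> K y -> K (x * y)) &
      (forall x, K x -> x != 0 -> K x^-1)].

Definition adjoin (k G : F -> Prop) : F -> Prop :=
  fun x => forall L, is_subfield L -> psubset k L -> psubset G L -> L x.

Definition minimal_gen (k K G : F -> Prop) : Prop :=
  (forall x, K x <-> adjoin k G x) /\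
  (forall x, G x -> ~ adjoin k (fun y => G y /\ y <> x) x).

Definition card_lt (G : F -> Prop) (s : nat) : Prop :=
  exists l : seq F, [/\ uniq l, (forall x, G x <-> x \in l) & (size l < s)%N].

Definition root_part (k K : F -> Prop) (n : nat) : F -> Prop :=
  fun x => K x /\ k (x ^+ (p ^ n)).

(* di(K/k) < s, i.e. sup_n |G_n| < s *)
Definition di_lt (k K : F -> Prop) (s : nat) : Prop :=
  forall n, exists G, minimal_gen k (root_part k K n) G /\ card_lt G s.

Definition q_finite (k K : F -> Prop) : Prop := exists d, di_lt k K d.

Definition bounded_exponent (k K : F -> Prop) : Prop :=
  exists e, forall x, K x -> k (x ^+ (p ^ e)).

Definition purely_insep (k K : F -> Prop) : Prop :=
  forall x, K x -> exists n, k (x ^+ (p ^ n)).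

Definition frob_adjoin (k L : F -> Prop) (m : nat) : F -> Prop :=
  adjoin k (fun y => exists x, L x /\ y = x ^+ (p ^ m)).

Definition is_o (k L : F -> Prop) (s m : nat) : Prop :=
  di_lt k (frob_adjoin k L m) s /\
  (forall m', di_lt k (frob_adjoin k L m') s -> (m <= m')%N).

Definition is_U (k K : F -> Prop) (s j : nat) (u : int) : Prop :=
  exists o, is_o k (root_part k K j) s o /\ u = (j%:Z - o%:Z)%R.

Definition U_unbounded (k K : F -> Prop) (s : nat) : Prop :=
  forall B : int, exists j u, is_U k K s j u /\ (B < u)%R.

Definition is_Ilqm (k K : F -> Prop) (t : nat) : Prop :=
  [/\ (1 <= t)%N, U_unbounded k K t &
      (forall s, (1 <= s)%N -> U_unbounded k K s -> (t <= s)%N)].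

End Defs.

Definition finite_ext (F : fieldType) (K1 K2 : F -> Prop) : Prop :=
  exists b : seq F, forall x, K2 x ->
    exists c : seq F, [/\ size c = size b, (forall i, (i < size c)%N -> K1 c`_i) &
      x = \sum_(i < size b) c`_i * b`_i].

(* Main.v *)
Require Import Defs.
From HB Require Import structures.
From mathcomp Require Import all_boot all_order all_algebra.
From mathcomp Require Import boolp.
From Stdlib Require List Classical_Prop.
From mathcomp Require Import ring.
From mathcomp Require Import zify.
Set Implicit Arguments. Unset Strict Implicit. Unset Printing Implicit Defensive.
Import Order.TTheory GRing.Theory Num.Theory.
Local Open Scope ring_scope.

Lemma setE (T : Type) (A B : T -> Prop) : (forall x, A x <-> B x) -> A = B.
Proof. by move=> H; apply: funext => x; apply: propext. Qed.

Section Matroid.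
Variable T : Type.
Variable cl : (T -> Prop) -> T -> Prop.
Variable P : T -> Prop.
Hypothesis cl_ext : forall A x, A x -> cl A x.
Hypothesis cl_mono : forall A B, (forall x, A x -> cl B x) -> forall x, cl A x -> cl B x.
Hypothesis cl_exch : forall A x y, P x -> cl (fun z => A z \/ z = x) y -> ~ cl A y ->
  cl (fun z => A z \/ z = y) x.

Fixpoint indep (B : T -> Prop) (a : seq T) : Prop :=
  if a is x :: a' then ~ cl B x /\ indep (fun z => B z \/ z = x) a' else True.

Lemma cl_incl A B : (forall x, A x -> B x) -> forall x, cl A x -> cl B x.
Proof. by move=> H; apply: cl_mono => x /H; apply: cl_ext. Qed.

Lemma cl_eq A B : (forall x, A x -> cl B x) -> (forall x, B x -> cl A x) -> cl A = cl B.
Proof. by move=> H1 H2; apply: setE => x; split; apply: cl_mono. Qed.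

Lemma cl_eqU A B x : cl A = cl B -> cl (fun z => A z \/ z = x) = cl (fun z => B z \/ z = x).
Proof.
move=> E; apply: cl_eq => z [Hz|->]; try (apply: cl_ext; by right).
- apply: (cl_incl (A := B)); first by move=> ?; left. by rewrite -E; apply: cl_ext.
- apply: (cl_incl (A := A)); first by move=> ?; left. by rewrite E; apply: cl_ext.
Qed.

Lemma indep_cl_eq a B B' : cl B = cl B' -> indep B a -> indep B' a.
Proof.
elim: a B B' => //= x a IH B B' E [H1 H2]; split; first by rewrite -E.
by apply: (IH (fun z => B z \/ z = x)) => //; apply: cl_eqU.
Qed.

Lemma indep_cat B a b : indep B (a ++ [:: b]) <->
  indep B a /\ ~ cl (fun z => B z \/ List.In z a) b.
Proof.
elim: a B => [|x a IH] B /=.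
  have -> : (fun z => B z \/ False) = B by apply: setE => z; intuition (subst; auto).
  intuition (subst; auto).
rewrite IH.
have -> : (fun z => (B z \/ z = x) \/ List.In z a) = (fun z => B z \/ x = z \/ List.In z a).
  by apply: setE => z; split; [case=> [[?|->]|?]; intuition (subst; auto) | case=> [?|[->|?]]; intuition (subst; auto)].
intuition (subst; auto).
Qed.

Lemma split_cl G B x : cl (fun z => B z \/ List.In z G) x -> ~ cl B x ->
  exists G1 g G2, [/\ G = G1 ++ g :: G2,
    cl (fun z => (B z \/ List.In z G1) \/ z = g) x & ~ cl (fun z => B z \/ List.In z G1) x].
Proof.
elim: G B => [|g G IH] B /= H1 H2.
  by exfalso; apply: H2; move: H1; apply: cl_incl => z [] //.
have [Hg|Hg] := Classical_Prop.classic (cl (fun z => B z \/ z = g) x).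
  exists [::], g, G; split => //=.
    by move: Hg; apply: cl_incl => z [?|->]; [left; left|right].
  by move: H2; apply: contra_not; apply: cl_incl => z [] //.
have [G1 [g' [G2 [E Hc Hn]]]] := IH (fun z => B z \/ z = g) ltac:(move: H1; apply: cl_incl => z; intuition (subst; auto)) Hg.
exists (g :: G1), g', G2; split; first by rewrite E.
  by move: Hc; apply: cl_incl => /= z; intuition (subst; auto).
by move: Hn; apply: contra_not; apply: cl_incl => /= z; intuition (subst; auto).
Qed.

Lemma steinitz a B G : indep B a ->
  (forall x, List.In x a -> cl (fun z => B z \/ List.In z G) x) ->
  (forall g, List.In g G -> P g) -> (size a <= size G)%N.
Proof.
elim: a B G => [|x a IH] B G //= [Hx Ha] Hsp HP.
have [G1 [g [G2 [E Hc Hn]]]] := split_cl (Hsp x (or_introl erefl)) Hx.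
have Pg : P g by apply: HP; rewrite E; apply: List.in_or_app; right; left.
have Hgx := cl_exch Pg Hc Hn.
have Hsub : forall z, B z \/ List.In z G ->
    cl (fun z => (B z \/ z = x) \/ List.In z (G1 ++ G2)) z.
  move=> z; rewrite E => -[Bz|/List.in_app_iff [Hz|[<-|Hz]]].
  - by apply: cl_ext; left; left.
  - by apply: cl_ext; right; apply/List.in_app_iff; left.
  - move: Hgx; apply: cl_incl => w [[?|?]|->]; [left;left|right; apply/List.in_app_iff; left|left;right] => //.
  - by apply: cl_ext; right; apply/List.in_app_iff; right.
have := IH (fun z => B z \/ z = x) (G1 ++ G2) Ha.
rewrite E size_cat /= size_cat addnS ltnS; apply.
  by move=> y Hy; apply: (cl_mono Hsub); apply: Hsp; right.
by move=> z Hz; apply: HP; rewrite E; apply/List.in_app_iff; move/List.in_app_iff: Hz => [?|?]; [left|right; right].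
Qed.

Lemma indep_addbase a B c : P c -> indep B a ->
  ~ cl (fun z => B z \/ List.In z a) c -> indep (fun z => B z \/ z = c) a.
Proof.
elim: a B => [|x a IH] B Pc //= [Hx Ha] Hc; split.
  move=> H; apply: Hc; move: (cl_exch Pc H Hx); apply: cl_incl => z [?|->]; [left|right;left] => //.
have := IH (fun z => B z \/ z = x) Pc Ha.
have E : (fun z => (B z \/ z = x) \/ z = c) = (fun z => (B z \/ z = c) \/ z = x).
  by apply: setE => z; intuition (subst; auto).
rewrite E; apply; move: Hc; apply: contra_not; apply: cl_incl => z; intuition (subst; auto).
Qed.

Lemma indep_exch a B c : P c -> (forall x, List.In x a -> P x) -> indep B a ->
  cl (fun z => B z \/ List.In z a) c -> ~ cl B c ->
  exists a', [/\ (size a').+1 = size a, (forall x, List.In x a' -> List.In x a),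
    indep (fun z => B z \/ z = c) a' &
    (forall y, cl (fun z => B z \/ List.In z a) y ->
               cl (fun z => (B z \/ z = c) \/ List.In z a') y)].
Proof.
elim: a B => [|x a IH] B Pc Pa /=.
  by move=> _ H1 H2; exfalso; apply: H2; move: H1; apply: cl_incl => z [] //.
move=> [Hx Ha] Hc Hnc.
have [H|H] := Classical_Prop.classic (cl (fun z => B z \/ z = x) c).
  have Hxc : cl (fun z => B z \/ z = c) x by apply: cl_exch => //; apply: Pa; left.
  have E : cl (fun z => B z \/ z = x) = cl (fun z => B z \/ z = c).
    apply: cl_eq => z [Bz|->] //; try (by apply: cl_ext; left).
  exists a; split => //.
    by move=> y Hy; right.
    by apply: (indep_cl_eq E).
  move=> y; apply: cl_mono => z /= [Bz|[<-|Hz]].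
  - by apply: cl_ext; left; left.
  - by move: Hxc; apply: cl_incl => w; intuition (subst; auto).
  - by apply: cl_ext; right.
have Hc' : cl (fun z => (B z \/ z = x) \/ List.In z a) c.
  by move: Hc; apply: cl_incl => /= z; intuition (subst; auto).
have [a' [Hs Hin Hi Hcl]] := IH (fun z => B z \/ z = x) Pc (fun y Hy => Pa y (or_intror Hy)) Ha Hc' H.
exists (x :: a'); split => /=.
- by rewrite Hs.
- by move=> y [<-|Hy]; [left|right; apply: Hin].
- split.
    move=> Hx'; apply: H; move: (cl_exch Pc Hx' Hx); apply: cl_incl => z; intuition (subst; auto).
  have E : (fun z => (B z \/ z = x) \/ z = c) = (fun z => (B z \/ z = c) \/ z = x).
    by apply: setE => z; intuition (subst; auto).
  by rewrite -E.
- move=> y Hy.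
  have : cl (fun z => (B z \/ z = x) \/ List.In z a) y by move: Hy; apply: cl_incl => /= z; intuition (subst; auto).
  move/Hcl; apply: cl_incl => /= z; intuition (subst; auto).
Qed.

End Matroid.

Lemma indep_transfer (T : Type) (cl1 cl2 : (T -> Prop) -> T -> Prop) B B' a :
  (forall X, cl1 (fun z => B z \/ X z) = cl2 (fun z => B' z \/ X z)) ->
  indep cl1 B a -> indep cl2 B' a.
Proof.
elim: a B B' => [|x a IH] B B' //= H [H1 H2]; split.
  have := H (fun _ => False).
  have -> : (fun z => B z \/ False) = B by apply: setE => z; intuition.
  have -> : (fun z => B' z \/ False) = B' by apply: setE => z; intuition.
  by move=> <-.
apply: (IH (fun z => B z \/ z = x)) => // X.
have -> : (fun z => (B z \/ z = x) \/ X z) = (fun z => B z \/ (z = x \/ X z)).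
  by apply: setE => z; intuition.
have -> : (fun z => (B' z \/ z = x) \/ X z) = (fun z => B' z \/ (z = x \/ X z)).
  by apply: setE => z; intuition.
exact: H.
Qed.


Section Basics.
Variable F : fieldType.

Section SF.
Variable S : F -> Prop.
Hypothesis HS : is_subfield S.
Lemma sf0 : S 0. Proof. by case: HS. Qed.
Lemma sf1 : S 1. Proof. by case: HS. Qed.
Lemma sfB x y : S x -> S y -> S (x - y). Proof. by case: HS => _ _ H _ _; apply: H. Qed.
Lemma sfM x y : S x -> S y -> S (x * y). Proof. by case: HS => _ _ _ H _; apply: H. Qed.
Lemma sfN x : S x -> S (- x). Proof. by move=> Hx; rewrite -sub0r; apply: sfB => //; apply: sf0. Qed.
Lemma sfD x y : S x -> S y -> S (x + y).
Proof. by move=> Hx Hy; rewrite -[y]opprK; apply: sfB => //; apply: sfN. Qed.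
Lemma sfV x : S x -> S x^-1.
Proof.
case: HS => _ _ _ _ H Hx; have [->|x0] := eqVneq x 0; last by apply: H.
by rewrite invr0; apply: sf0.
Qed.
Lemma sfX x n : S x -> S (x ^+ n).
Proof. by move=> Hx; elim: n => [|n IH]; [rewrite expr0; apply: sf1|rewrite exprS; apply: sfM]. Qed.
Lemma sfn n : S n%:R.
Proof. elim: n => [|n IH]; first exact: sf0. by rewrite -addn1 natrD; apply: sfD => //; apply: sf1. Qed.
Lemma sf_sum I (r : seq I) (P : pred I) (f : I -> F) :
  (forall i, P i -> S (f i)) -> S (\sum_(i <- r | P i) f i).
Proof. by move=> H; apply: (big_ind S) => //; [apply: sf0|apply: sfD]. Qed.
End SF.

Lemma adjoin_sf (k G : F -> Prop) : is_subfield (adjoin k G).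
Proof.
split.
- by move=> L HL _ _; apply: sf0.
- by move=> L HL _ _; apply: sf1.
- by move=> x y Hx Hy L HL H1 H2; apply: sfB => //; [apply: Hx|apply: Hy].
- by move=> x y Hx Hy L HL H1 H2; apply: sfM => //; [apply: Hx|apply: Hy].
- by move=> x Hx _ L HL H1 H2; apply: sfV => //; apply: Hx.
Qed.

Lemma adjoin_k (k G : F -> Prop) x : k x -> adjoin k G x.
Proof. by move=> Hx L _ H _; apply: H. Qed.
Lemma adjoin_G (k G : F -> Prop) x : G x -> adjoin k G x.
Proof. by move=> Hx L _ _ H; apply: H. Qed.
Lemma adjoin_min (k G L : F -> Prop) : is_subfield L -> psubset k L -> psubset G L ->
  psubset (adjoin k G) L.
Proof. by move=> HL H1 H2 x Hx; apply: Hx. Qed.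

Lemma adjoin_union (k A B : F -> Prop) :
  adjoin k (fun z => A z \/ B z) = adjoin (adjoin k A) B.
Proof.
apply: setE => x; split.
- apply: adjoin_min; first exact: adjoin_sf.
  + by move=> z Hz; apply: adjoin_k; apply: adjoin_k.
  + move=> z [Hz|Hz]; last by apply: adjoin_G.
    by apply: adjoin_k; apply: adjoin_G.
- apply: adjoin_min; first exact: adjoin_sf.
  + apply: adjoin_min; first exact: adjoin_sf.
    * by move=> z Hz; apply: adjoin_k.
    * by move=> z Hz; apply: adjoin_G; left.
  + by move=> z Hz; apply: adjoin_G; right.
Qed.

Lemma adjoin_self (k G : F -> Prop) : is_subfield k -> psubset G k -> adjoin k G = k.
Proof.
move=> Hk HG; apply: setE => x; split; last exact: adjoin_k.
by apply: adjoin_min.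
Qed.

Lemma adjoin_mono (k G k' G' : F -> Prop) : psubset k (adjoin k' G') ->
  psubset G (adjoin k' G') -> psubset (adjoin k G) (adjoin k' G').
Proof. by move=> H1 H2; apply: adjoin_min => //; apply: adjoin_sf. Qed.

End Basics.

Section Frob.
Variable F : fieldType.
Variable p : nat.
Hypothesis Hp : prime p.
Hypothesis Hc : p \in [pchar F].

Lemma pnat_pm m : [pchar F].-nat (p ^ m)%N.
Proof. by rewrite pnatX pnatE // Hc. Qed.

Lemma frobD m (x y : F) : (x + y) ^+ (p ^ m) = x ^+ (p ^ m) + y ^+ (p ^ m).
Proof. by rewrite exprDn_pchar // pnat_pm. Qed.
Lemma frobN m (x : F) : (- x) ^+ (p ^ m) = - x ^+ (p ^ m).
Proof. by rewrite exprNn_pchar // pnat_pm. Qed.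
Lemma frobB m (x y : F) : (x - y) ^+ (p ^ m) = x ^+ (p ^ m) - y ^+ (p ^ m).
Proof. by rewrite frobD frobN. Qed.

Definition fimg (A : F -> Prop) (q : nat) := fun y => exists x, A x /\ y = x ^+ q.

Lemma frob_adjoin_img m (E A : F -> Prop) y : adjoin E A y ->
  adjoin (fimg E (p ^ m)) (fimg A (p ^ m)) (y ^+ (p ^ m)).
Proof.
set L := fun z => adjoin (fimg E (p ^ m)) (fimg A (p ^ m)) (z ^+ (p ^ m)).
have HL : is_subfield L.
  have H := adjoin_sf (fimg E (p ^ m)) (fimg A (p ^ m)).
  rewrite /L; split.
  - rewrite expr0n.
    have -> : (p ^ m == 0)%N = false by rewrite expn_eq0; case: (p) Hp.
    by apply: (sf0 H).
  - by rewrite expr1n; apply: (sf1 H).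
  - by move=> x z Hx Hz; rewrite frobB; apply: (sfB H).
  - by move=> x z Hx Hz; rewrite exprMn; apply: (sfM H).
  - by move=> x Hx _; rewrite exprVn; apply: (sfV H).
apply: (adjoin_min HL).
- by move=> x Hx; apply: adjoin_k; exists x.
- by move=> x Hx; apply: adjoin_G; exists x.
Qed.

Lemma fimg_sub (E : F -> Prop) q : is_subfield E -> psubset (fimg E q) E.
Proof. by move=> HE y [x [Hx ->]]; apply: sfX. Qed.

End Frob.

Section SubF.
Variable F : fieldType.
Variable S : F -> Prop.
Hypothesis HS : is_subfield S.

Definition Sb : {pred F} := fun x => `[< S x >].

Lemma SbP x : reflect (S x) (x \in Sb).
Proof. exact: asboolP. Qed.

Lemma Sb_divring : GRing.divring_closed Sb.
Proof.
split; first by apply/SbP; apply: sf1.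
- by move=> x y /SbP Hx /SbP Hy; apply/SbP; apply: sfB.
- move=> x y /SbP Hx /SbP Hy; apply/SbP.
  by apply: sfM => //; apply: sfV.
Qed.

HB.instance Definition _ := GRing.isDivringClosed.Build F Sb Sb_divring.

Record subT := SubT {sval :> F; svalP : sval \in Sb}.
HB.instance Definition _ := [isSub for sval].
HB.instance Definition _ := [Choice of subT by <:].
HB.instance Definition _ := [SubChoice_isSubIntegralDomain of subT by <:].
HB.instance Definition _ := [SubIntegralDomain_isSubField of subT by <:].

Definition overS (q : {poly F}) := forall i, S q`_i.

Lemma overS_lift q : overS q -> exists q' : {poly subT}, q = map_poly val q'.
Proof.
move=> Hq.
have H i : (q`_i \in Sb) by apply/SbP.
exists (\poly_(i < size q) (SubT (H i))); rewrite -{1}[q]coefK.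
by apply/polyP=> i; rewrite coef_map !coef_poly; case: ifP.
Qed.

Lemma overS_map (q' : {poly subT}) : overS (map_poly val q').
Proof. by move=> i; rewrite coef_map; apply/SbP; apply: svalP. Qed.

Lemma overS_modp a b : overS a -> overS b -> overS (a %% b).
Proof.
move=> /overS_lift [a' ->] /overS_lift [b' ->].
by rewrite -map_modp; apply: overS_map.
Qed.

Lemma overS_gcdp a b : overS a -> overS b -> overS (gcdp a b).
Proof.
move=> /overS_lift [a' ->] /overS_lift [b' ->].
by rewrite -gcdp_map; apply: overS_map.
Qed.

Lemma overS_horner q a : overS q -> S a -> S q.[a].
Proof.
move=> Hq Ha; rewrite horner_coef; apply: sf_sum => // i _.
by apply: sfM => //; apply: sfX.
Qed.

Lemma overS_B a b : overS a -> overS b -> overS (a - b).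
Proof. by move=> Ha Hb i; rewrite coefB; apply: sfB. Qed.
Lemma overS_M a b : overS a -> overS b -> overS (a * b).
Proof.
move=> Ha Hb i; rewrite coefM; apply: sf_sum => // j _; exact: sfM.
Qed.
Lemma overS_C c : S c -> overS c%:P.
Proof. by move=> Hc i; rewrite coefC; case: ifP => _ //; apply: sf0. Qed.
Lemma overS_X : overS 'X.
Proof. by move=> i; rewrite coefX; apply: sfn. Qed.
Lemma overS_Xn n : overS 'X^n.
Proof. by move=> i; rewrite coefXn; apply: sfn. Qed.

End SubF.

Lemma coef_XsubC_exp (F : fieldType) (x : F) j :
  (0 < j)%N -> (('X - x%:P) ^+ j)`_j.-1 = - (x *+ j).
Proof.
elim: j => [|j IH] // _.
case: j IH => [|j] IH.
  by rewrite expr1 coefB coefX coefC /= sub0r.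
rewrite exprS mulrC mulrBr coefB coefMX coefMC /= IH //.
have : lead_coef (('X - x%:P) ^+ j.+1) = 1.
  by apply/eqP; apply: monic_exp; apply: monicXsubC.
rewrite lead_coefE size_exp_XsubC /= => ->.
by rewrite mul1r [in RHS]mulrS opprD addrC.
Qed.

Section Exch.
Variable F : fieldType.
Variable p : nat.
Hypothesis Hp : prime p.
Hypothesis Hc : p \in [pchar F].

Lemma XsubC_frob (x : F) : ('X - x%:P) ^+ p = 'X^p - (x ^+ p)%:P.
Proof.
have Hc' : p \in [pchar {poly F}] by apply: (rmorph_pchar polyC).
rewrite exprDn_pchar; last by rewrite pnatE.
by rewrite exprNn_pchar ?pnatE // rmorphXn.
Qed.

Lemma exch_one (D : F -> Prop) x y : is_subfield D -> D (x ^+ p) ->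
  adjoin D (fun z => z = x) y -> ~ D y -> adjoin D (fun z => z = y) x.
Proof.
move=> HD Dxp Hy Dy.
set R := fun z => exists q, overS D q /\ z = q.[x].
have R_D c : D c -> R c by move=> Hc0; exists c%:P; split; [apply: (overS_C HD)|rewrite hornerC].
have R_B a b : R a -> R b -> R (a - b).
  by move=> [qa [Ha ->]] [qb [Hb ->]]; exists (qa - qb); split; [apply: (overS_B HD)|rewrite hornerD hornerN].
have R_M a b : R a -> R b -> R (a * b).
  by move=> [qa [Ha ->]] [qb [Hb ->]]; exists (qa * qb); split; [apply: (overS_M HD)|rewrite hornerM].
have R_X a n : R a -> R (a ^+ n).
  by move=> Ha; elim: n => [|n IH]; [rewrite expr0; apply: R_D; apply: (sf1 HD)|rewrite exprS; apply: R_M].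
have R_p a : R a -> D (a ^+ p).
  move=> [q [Hq ->]].
  have -> : q.[x] ^+ p = (map_poly (pFrobenius_aut Hc) q).[pFrobenius_aut Hc x].
    by rewrite horner_map.
  apply: (overS_horner HD) => //.
    by move=> i; rewrite coef_map; apply: (sfX HD).
have HR : is_subfield R.
  split.
  - by apply: R_D; apply: (sf0 HD).
  - by apply: R_D; apply: (sf1 HD).
  - exact: R_B.
  - exact: R_M.
  - move=> a Ha a0.
    have -> : a^-1 = a ^+ p.-1 * (a ^+ p)^-1.
      rewrite -{2}(prednK (prime_gt0 Hp)) exprS invfM mulrA mulrC mulrA.
      by rewrite mulVf ?expf_neq0 // mul1r.
    by apply: R_M; [apply: R_X|apply: R_D; apply: (sfV HD); apply: R_p].
have [q [Hq Hyq]] : R y.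
  apply: (adjoin_min HR) Hy; first by move=> c; apply: R_D.
  by move=> z ->; exists 'X; split; [apply: (overS_X HD)|rewrite hornerX].
set m := 'X^p - (x ^+ p)%:P.
have Dm : overS D m by apply: (overS_B HD); [apply: (overS_Xn HD)|apply: (overS_C HD)].
have m0 : m != 0 by rewrite -size_poly_eq0 size_XnsubC ?prime_gt0.
set r := q %% m.
have Dr : overS D r by apply: (overS_modp HD).
have sr : (size r <= p)%N.
  by have := ltn_modpN0 q m0; rewrite size_XnsubC ?prime_gt0.
have Hyr : y = r.[x].
  rewrite Hyq {1}(divp_eq q m) hornerD hornerM.
  by rewrite /m hornerD hornerN hornerXn hornerC subrr mulr0 add0r.
set D' := adjoin D (fun z => z = y).
have HD' : is_subfield D' by apply: adjoin_sf.
have DD' c : D c -> D' c by move=> Hc0; apply: adjoin_k.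
have yD' : D' y by apply: adjoin_G.
set Q := r - y%:P.
have DQ : overS D' Q.
  by apply: (overS_B HD') => //; [move=> i; apply: DD'|apply: (overS_C HD')].
have Q0 : Q != 0.
  apply/negP => /eqP HQ; apply: Dy.
  have : r = y%:P by apply/eqP; rewrite -subr_eq0 -/Q HQ.
  move=> Er; have := Dr 0; rewrite Er coefC /=; done.
have rootQ : root Q x by rewrite /root /Q hornerD hornerN hornerC -Hyr subrr.
have sQ : (size Q <= p)%N.
  apply: leq_trans (size_add _ _) _; rewrite geq_max sr size_opp size_polyC.
  by case: (y != 0); rewrite ?prime_gt0 //.
set g := gcdp Q m.
have Dg : overS D' g by apply: (overS_gcdp HD') => // i; apply: DD'.
have gm : g %| ('X - x%:P) ^+ p by rewrite XsubC_frob dvdp_gcdr.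
have [j jp gj] := dvdp_exp_XsubCP gm.
have rootg : root g x by rewrite root_gcd rootQ /root /m hornerD hornerN hornerXn hornerC subrr eqxx.
have j0 : (0 < j)%N.
  case: j jp gj => // _ gj; move: rootg; rewrite (eqp_root gj) expr0 /root hornerC.
  by rewrite oner_eq0.
have sg : size g = j.+1 by rewrite (eqp_size gj) size_exp_XsubC.
have jlt : (j < p)%N.
  by rewrite -ltnS -sg; apply: leq_ltn_trans (dvdp_leq Q0 (dvdp_gcdl _ _)) _; rewrite ltnS.
move/eqpP: gj => [[c1 c2] /andP [c10 c20] /= Eg].
set h := ('X - x%:P) ^+ j.
have hj : h`_j = 1.
  have : lead_coef h = 1 by apply/eqP; apply: monic_exp; apply: monicXsubC.
  by rewrite lead_coefE size_exp_XsubC.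
have hj1 : h`_j.-1 = - (x *+ j) by apply: coef_XsubC_exp.
have E1 : c1 * g`_j = c2 by rewrite -coefZ Eg coefZ hj mulr1.
have E2 : c1 * g`_j.-1 = c2 * - (x *+ j) by rewrite -coefZ Eg coefZ hj1.
have gj0 : g`_j != 0.
  by apply/eqP => H; move: E1; rewrite H mulr0 => /esym/eqP; rewrite (negbTE c20).
have jn0 : (j%:R : F) != 0.
  rewrite -(dvdn_pcharf Hc); apply/negP => /(dvdn_leq j0); rewrite leqNgt jlt.
  done.
have Eg1 : g`_j.-1 = g`_j * - (x *+ j).
  by apply: (mulfI c10); rewrite E2 mulrA E1.
have -> : x = - (g`_j.-1 / (g`_j * j%:R)).
  rewrite Eg1 -mulr_natr; field.
  by rewrite gj0 jn0.
apply: (sfN HD'); apply: (sfM HD') => //; apply: (sfV HD'); apply: (sfM HD') => //; exact: (sfn HD').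
Qed.

End Exch.

Section BM.
Variable F : fieldType.
Variable p : nat.
Hypothesis Hp : prime p.
Hypothesis Hc : p \in [pchar F].

Section Cl.
Variable E : F -> Prop.
Hypothesis HE : is_subfield E.

Lemma adj_ext A x : A x -> adjoin E A x.
Proof. exact: adjoin_G. Qed.

Lemma adj_mono (A B : F -> Prop) : (forall x, A x -> adjoin E B x) ->
  forall x, adjoin E A x -> adjoin E B x.
Proof. by move=> H; apply: adjoin_mono => // z Hz; apply: adjoin_k. Qed.

Lemma adj_exch (A : F -> Prop) x y : E (x ^+ p) ->
  adjoin E (fun z => A z \/ z = x) y -> ~ adjoin E A y ->
  adjoin E (fun z => A z \/ z = y) x.
Proof.
move=> Ex; rewrite !adjoin_union => H1 H2.
apply: (exch_one Hp Hc) => //; first exact: adjoin_sf.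
by apply: adjoin_k.
Qed.

Lemma adj_steinitz a G : indep (adjoin E) (fun _ => False) a ->
  (forall x, List.In x a -> adjoin E (fun z => List.In z G) x) ->
  (forall g, List.In g G -> E (g ^+ p)) -> (size a <= size G)%N.
Proof.
move=> Ha H1 H2; apply: (steinitz (P := fun x => E (x ^+ p)) adj_ext adj_mono) Ha _ H2.
  by move=> A x y; apply: adj_exch.
move=> x /H1; apply: adj_mono => z Hz; apply: adjoin_G; right. done.
Qed.

End Cl.

Definition base (k N : F -> Prop) := adjoin k (fimg N p).

Lemma base_sf k N : is_subfield (base k N). Proof. exact: adjoin_sf. Qed.

Lemma base_sub k N : is_subfield k -> is_subfield N -> psubset k N -> psubset (base k N) N.
Proof.
move=> Hk HN HkN; apply: adjoin_min => //.
by move=> y [x [Hx ->]]; apply: sfX.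
Qed.

Lemma base_p k N x : N x -> base k N (x ^+ p).
Proof. by move=> Hx; apply: adjoin_G; exists x. Qed.

Lemma cl_base_union (E : F -> Prop) c X :
  adjoin (adjoin E (fun z => z = c)) X = adjoin E (fun z => (False \/ z = c) \/ X z).
Proof.
rewrite adjoin_union.
have -> : (fun z => False \/ z = c) = (fun z => z = c) by apply: setE => z; intuition.
by [].
Qed.

Definition chainN k N a :=
  indep (adjoin (base k N)) (fun _ => False) a /\ (forall x, List.In x a -> N x).

Lemma step_chain k N b a : is_subfield k -> is_subfield N -> psubset k N ->
  N (b ^+ p) -> chainN k N a ->
  exists a', chainN k (adjoin N (fun z => z = b)) a' /\ (size a <= size a')%N.
Proof.
move=> Hk HN HkN Nbp [Ha aN].
set N' := adjoin N (fun z => z = b).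
set E := base k N; set c := b ^+ p.
have HE : is_subfield E by apply: base_sf.
have EN : psubset E N by apply: base_sub.
have NN' : psubset N N' by move=> z; apply: adjoin_k.
have bN' : N' b by apply: adjoin_G.
have HN' : is_subfield N' by apply: adjoin_sf.
have E'E : base k N' = adjoin E (fun z => z = c).
  apply: setE => z; split.
  - apply: adjoin_min; first exact: adjoin_sf.
      by move=> w Hw; apply: adjoin_k; apply: adjoin_k.
    move=> w [v [Hv ->]].
    have := frob_adjoin_img Hp Hc (m:=1) Hv; rewrite expn1; apply: adjoin_mono.
      by move=> u Hu; apply: adjoin_k; apply: adjoin_G.
    by move=> u [u' [-> ->]]; apply: adjoin_G.
  - apply: adjoin_min; first exact: adjoin_sf.
      apply: adjoin_mono; first by move=> w Hw; apply: adjoin_k.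
      by move=> w [v [Hv ->]]; apply: adjoin_G; exists v; split => //; apply: NN'.
    by move=> w ->; apply: adjoin_G; exists b.
have aN' : forall x, List.In x a -> N' x by move=> x /aN; apply: NN'.
have [cE|cE] := Classical_Prop.classic (E c).
  exists a; split => //; split => //.
  have -> : base k N' = E.
    by rewrite E'E; apply: adjoin_self => // z ->.
  exact: Ha.
have bN : ~ N b.
  by move=> Hb; apply: cE; apply: adjoin_G; exists b.
have Pa : forall x, List.In x a -> E (x ^+ p) by move=> x /aN; apply: base_p.
have Pc : E (c ^+ p) by apply: base_p.
have Htr : forall X, adjoin E (fun z => (False \/ z = c) \/ X z) =
                     adjoin (base k N') (fun z => False \/ X z).
  move=> X; rewrite E'E cl_base_union; congr adjoin; apply: setE => z.
  by intuition.
have Hfin : forall a', (forall x, List.In x a' -> N x) ->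
   indep (adjoin (base k N')) (fun _ => False) a' ->
   chainN k N' (a' ++ [:: b]).
  move=> a' a'N Hi; split.
    apply/indep_cat; split => // Hb; apply: bN.
    move: Hb; apply: adjoin_min => //.
      by rewrite E'E; apply: adjoin_min => // z ->; apply: Nbp.
    by move=> z [[]|/a'N].
  by move=> x /List.in_app_iff [/a'N Hx|[<-|[]]] //; apply: NN'.
have [Hca|Hca] := Classical_Prop.classic (adjoin E (fun z => False \/ List.In z a) c).
  have Hnc : ~ adjoin E (fun _ => False) c.
    by rewrite adjoin_self // => z [].
  have [a' [Hs Hin Hi _]] := indep_exch (adj_ext (E := E)) (@adj_mono E) (@adj_exch E) Pc Pa Ha Hca Hnc.
  exists (a' ++ [:: b]); split.
    apply: Hfin; first by move=> x /Hin /aN.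
    by apply: (indep_transfer Htr).
  by rewrite size_cat addn1 Hs.
exists (a ++ [:: b]); split.
  apply: Hfin => //.
  apply: (indep_transfer Htr).
  exact: (indep_addbase (adj_ext (E := E)) (@adj_mono E) (@adj_exch E) Pc Ha Hca).
by rewrite size_cat leq_addr.
Qed.

End BM.

Lemma InE (T : eqType) (x : T) l : List.In x l <-> x \in l.
Proof.
elim: l => [|y l IH] //=; rewrite in_cons; split.
  by case=> [->|/IH ->]; rewrite ?eqxx ?orbT.
by case/orP => [/eqP ->|/IH]; [left|right].
Qed.

Section BM2.
Variable F : fieldType.
Variable p : nat.
Hypothesis Hp : prime p.
Hypothesis Hc : p \in [pchar F].
Variable k : F -> Prop.
Hypothesis Hk : is_subfield k.

Definition Qt t N := exists a, chainN p k N a /\ (t <= size a)%N.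

Lemma adjoin_twice (N : F -> Prop) g h : adjoin N (fun z => z = g) h ->
  adjoin (adjoin N (fun z => z = h)) (fun z => z = g) = adjoin N (fun z => z = g).
Proof.
move=> Hh; apply: setE => x; split.
  apply: adjoin_min; first exact: adjoin_sf.
    by apply: adjoin_min; [exact: adjoin_sf|move=> z; apply: adjoin_k|move=> z ->].
  by move=> z ->; apply: adjoin_G.
apply: adjoin_mono; first by move=> z Hz; apply: adjoin_k; apply: adjoin_k.
by move=> z ->; apply: adjoin_G.
Qed.

Lemma reach1 t e : forall N g, is_subfield N -> psubset k N ->
  N (g ^+ (p ^ e)) -> Qt t N -> Qt t (adjoin N (fun z => z = g)).
Proof.
elim: e => [|e IH] N g HN HkN Hg HQ.
  by rewrite adjoin_self // => z ->; move: Hg; rewrite expn0 expr1.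
have Hh : N ((g ^+ p) ^+ (p ^ e)) by rewrite -exprM -expnS.
have HQ' := IH N (g ^+ p) HN HkN Hh HQ.
set N1 := adjoin N (fun z => z = g ^+ p).
have HN1 : is_subfield N1 by apply: adjoin_sf.
have HkN1 : psubset k N1 by move=> z /HkN; apply: adjoin_k.
have [a [Ha Hs]] := HQ'.
have Hb : N1 (g ^+ p) by apply: adjoin_G.
have [a' [Ha' Hs']] := step_chain Hp Hc Hk HN1 HkN1 Hb Ha.
rewrite -(@adjoin_twice N g (g ^+ p)); last first.
  by apply: (sfX (adjoin_sf _ _)); apply: adjoin_G.
by exists a'; split => //; apply: leq_trans Hs'.
Qed.

Lemma reachL t l : forall N, is_subfield N -> psubset k N ->
  (forall g, List.In g l -> exists e, k (g ^+ (p ^ e))) ->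
  Qt t N -> Qt t (adjoin N (fun z => List.In z l)).
Proof.
elim: l => [|g l IH] N HN HkN Hl HQ.
  by rewrite adjoin_self.
have -> : adjoin N (fun z => List.In z (g :: l)) =
          adjoin (adjoin N (fun z => z = g)) (fun z => List.In z l).
  rewrite -adjoin_union; congr adjoin; apply: setE => z /=; intuition.
apply: IH.
- exact: adjoin_sf.
- by move=> z /HkN; apply: adjoin_k.
- by move=> g' Hg'; apply: Hl; right.
have [e He] := Hl g (or_introl erefl).
by apply: (reach1 (e := e)) => //; apply: HkN.
Qed.

Section Fixed.
Variables M1 M2 : F -> Prop.
Hypothesis HM1 : is_subfield M1.
Hypothesis HM2 : is_subfield M2.
Hypothesis Hk1 : psubset k M1.
Hypothesis H12 : psubset M1 M2.
Variable e : nat.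
Hypothesis He : forall x, M2 x -> k (x ^+ (p ^ e)).
Variable g2 : seq F.
Hypothesis Hg2 : forall x, M2 x <-> adjoin k (fun z => List.In z g2) x.

Lemma chain_bound a : chainN p k M1 a -> (size a <= size g2)%N.
Proof.
move=> Ha.
have g2M2 : forall z, List.In z g2 -> M2 z by move=> z Hz; apply/Hg2; apply: adjoin_G.
have HQ : Qt (size a) (adjoin M1 (fun z => List.In z g2)).
  apply: reachL => //; last by exists a.
  by move=> g /g2M2 Hg; exists e; apply: He.
have EM2 : adjoin M1 (fun z => List.In z g2) = M2.
  apply: setE => x; split.
    by apply: adjoin_min.
  move/Hg2; apply: adjoin_mono; first by move=> z /Hk1; apply: adjoin_k.
  by move=> z Hz; apply: adjoin_G.
rewrite EM2 in HQ; have [a' [[Ha' a'M] Hs]] := HQ.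
apply: leq_trans Hs _.
apply: (adj_steinitz Hp Hc Ha').
  move=> x /a'M /Hg2; apply: adjoin_mono; last by move=> z Hz; apply: adjoin_G.
  by move=> z Hz; apply: adjoin_k; apply: adjoin_k.
by move=> g /g2M2; apply: base_p.
Qed.

Lemma max_chain : exists a, chainN p k M1 a /\
  psubset M1 (adjoin (base p k M1) (fun z => False \/ List.In z a)).
Proof.
suff : forall n a, (size g2 - size a = n)%N -> chainN p k M1 a -> exists a, chainN p k M1 a /\
  psubset M1 (adjoin (base p k M1) (fun z => False \/ List.In z a)).
  by move=> H; apply: (H _ [::] erefl).
elim/ltn_ind => n IH a Hn Ha.
have [Hm|Hm] := Classical_Prop.classic
  (psubset M1 (adjoin (base p k M1) (fun z => False \/ List.In z a))).
  by exists a.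
have [x [Hx Hnx]] : exists x, M1 x /\ ~ adjoin (base p k M1) (fun z => False \/ List.In z a) x.
  apply: Classical_Prop.NNPP => H; apply: Hm => x Hx.
  by apply: Classical_Prop.NNPP => Hn'; apply: H; exists x.
have Ha' : chainN p k M1 (a ++ [:: x]).
  split; first by apply/indep_cat; split => //; case: Ha.
  by move=> z /List.in_app_iff [|[<-|[]]] //; case: Ha => _; apply.
have := chain_bound Ha'; rewrite size_cat addn1 => Hs.
apply: (IH (size g2 - size (a ++ [:: x]))%N) => //.
by rewrite -Hn size_cat addn1; apply: ltn_sub2l.
Qed.

End Fixed.
End BM2.

Section Final.
Variable F : fieldType.
Variable p : nat.
Hypothesis Hp : prime p.
Hypothesis Hc : p \in [pchar F].
Variable k : F -> Prop.
Hypothesis Hk : is_subfield k.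

Lemma frob_iter (M : F -> Prop) (a : seq F) e : is_subfield M -> psubset k M ->
  (forall x, M x -> k (x ^+ (p ^ e))) -> (forall x, List.In x a -> M x) ->
  psubset M (adjoin (base p k M) (fun z => False \/ List.In z a)) ->
  psubset M (adjoin k (fun z => List.In z a)).
Proof.
move=> HM HkM He aM Hb.
set A := adjoin k (fun z => List.In z a).
have HA : is_subfield A by apply: adjoin_sf.
have kA : psubset k A by move=> z; apply: adjoin_k.
have claim : forall i, psubset M (adjoin A (fimg M (p ^ i))).
  elim=> [|i IH].
    by move=> x Hx; apply: adjoin_G; exists x; rewrite expn0 expr1.
  move=> x /IH; apply: adjoin_mono; first by move=> z Hz; apply: adjoin_k.
  move=> y [z [Hz ->]].
  have Hz' : adjoin k (fun w => fimg M p w \/ (False \/ List.In w a)) z.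
    by rewrite adjoin_union; apply: Hb.
  have := frob_adjoin_img Hp Hc (m := i) Hz'.
  apply: adjoin_mono.
    by move=> w Hw; apply: adjoin_k; apply: kA; apply: (fimg_sub (q := (p ^ i)%N) Hk Hw).
  move=> w [v [Hv ->]]; case: Hv => [[u [Hu ->]]|[[]|Hv]].
    by apply: adjoin_G; exists u; split => //; rewrite -exprM -expnS.
  by apply: adjoin_k; apply: (sfX HA); apply: adjoin_G.
move=> x /(claim e); rewrite adjoin_self //.
by move=> y [z [Hz ->]]; apply: kA; apply: He.
Qed.

Lemma min_gen (M : F -> Prop) (l : seq F) :
  (forall x, M x <-> adjoin k (fun z => z \in l) x) ->
  exists G, minimal_gen k M G /\ card_lt G (size l).+1.
Proof.
move=> Hl.
suff : forall n l, (size l <= n)%N -> uniq l -> (forall x, M x <-> adjoin k (fun z => z \in l) x) ->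
  exists G, minimal_gen k M G /\ card_lt G (size l).+1.
  move=> H.
  have Eu : (fun z => (z \in undup l) : Prop) = (fun z => (z \in l) : Prop) by apply: setE => z; rewrite mem_undup.
  have Hl' : forall x, M x <-> adjoin k (fun z => z \in undup l) x by rewrite Eu.
  have [G [HG [l' [u1 u2 u3]]]] := H (size (undup l)) (undup l) (leqnn _) (undup_uniq l) Hl'.
  exists G; split => //; exists l'; split => //.
  by apply: leq_trans u3 _; rewrite ltnS size_undup.
elim=> [|n IH] l0 Hs Hu H0.
  move: Hs; rewrite leqn0 => /nilP E0; subst l0.
  exists (fun z => (z \in [::]) : Prop); split; last by exists [::].
  by split => // x; rewrite in_nil.
have [[x [Hx Hadj]]|Hn] := Classical_Prop.classic
  (exists x, x \in l0 /\ adjoin k (fun y => y \in l0 /\ y <> x) x).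
  have Hr : forall y, (y \in rem x l0) <-> (y \in l0 /\ y <> x).
    by move=> y; rewrite mem_rem_uniq // inE; split => [/andP [/eqP ? ?]|[-> /eqP ->]].
  have Heq : forall z, adjoin k (fun z => z \in l0) z <-> adjoin k (fun z => z \in rem x l0) z.
    move=> z; split.
      apply: adjoin_mono; first by move=> w Hw; apply: adjoin_k.
      move=> w Hw; have [->|wx] := eqVneq w x.
        by move: Hadj; apply: adjoin_mono; [move=> ? ?; apply: adjoin_k|move=> v /Hr Hv; apply: adjoin_G].
      by apply: adjoin_G; apply/Hr; split => //; apply/eqP.
    by apply: adjoin_mono; [move=> ? ?; apply: adjoin_k|move=> v /Hr [Hv _]; apply: adjoin_G].
  have Hsz : size (rem x l0) = (size l0).-1 by rewrite size_rem.
  have [G [HG HcG]] := IH (rem x l0) ltac:(rewrite Hsz; move: Hs; case: (size l0) => //) (rem_uniq _ Hu)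
    ltac:(move=> z; rewrite H0; apply: Heq).
  exists G; split => //; case: HcG => [l' [u1 u2 u3]]; exists l'; split => //.
  apply: leq_trans u3 _; rewrite Hsz ltnS; exact: leq_pred.
exists (fun z => z \in l0); split.
  split => // x Hx Hadj; apply: Hn; exists x; split => //.
by exists l0.
Qed.

Lemma BMgen (M1 M2 : F -> Prop) e s (g2 : seq F) :
  is_subfield M1 -> is_subfield M2 -> psubset k M1 -> psubset M1 M2 ->
  (forall x, M2 x -> k (x ^+ (p ^ e))) ->
  (forall x, M2 x <-> adjoin k (fun z => z \in g2) x) -> (size g2 < s)%N ->
  exists G, minimal_gen k M1 G /\ card_lt G s.
Proof.
move=> HM1 HM2 Hk1 H12 He Hg2 Hs.
have Hg2' : forall x, M2 x <-> adjoin k (fun z => List.In z g2) x.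
  have -> : (fun z => List.In z g2) = (fun z => (z \in g2) : Prop) by apply: setE => z; exact: InE.
  exact: Hg2.
have [a [Ha Hmax]] := max_chain Hp Hc Hk HM1 HM2 Hk1 H12 He Hg2'.
have Hb := chain_bound Hp Hc Hk HM1 HM2 Hk1 H12 He Hg2' Ha.
have He1 : forall x, M1 x -> k (x ^+ (p ^ e)) by move=> x /H12 /He.
have Hfi := frob_iter HM1 Hk1 He1 (proj2 Ha) Hmax.
have HM : forall x, M1 x <-> adjoin k (fun z => z \in a) x.
  move=> x; split.
    move/Hfi; apply: adjoin_mono; first by move=> z; apply: adjoin_k.
    by move=> z Hz; apply: adjoin_G; apply/InE.
  by apply: adjoin_min => // z Hz; apply: (proj2 Ha); apply/InE.
have [G [HG [l' [u1 u2 u3]]]] := min_gen HM.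
exists G; split => //; exists l'; split => //.
by apply: leq_trans u3 _; exact: leq_ltn_trans Hb Hs.
Qed.

Lemma root_part_sf (M : F -> Prop) n : is_subfield M -> is_subfield (root_part p k M n).
Proof.
move=> HM; split.
- split; first exact: sf0.
  rewrite expr0n; have -> : (p ^ n == 0)%N = false by rewrite expn_eq0; case: (p) Hp.
  exact: sf0.
- by split; [exact: sf1|rewrite expr1n; exact: sf1].
- by move=> x y [Hx Kx] [Hy Ky]; split; [exact: sfB|rewrite frobB //; exact: sfB].
- by move=> x y [Hx Kx] [Hy Ky]; split; [exact: sfM|rewrite exprMn; exact: sfM].
- by move=> x [Hx Kx] _; split; [exact: sfV|rewrite exprVn; exact: sfV].
Qed.

Lemma di_mono (M1 M2 : F -> Prop) s : is_subfield M1 -> is_subfield M2 ->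
  psubset k M1 -> psubset M1 M2 -> di_lt p k M2 s -> di_lt p k M1 s.
Proof.
move=> HM1 HM2 Hk1 H12 Hdi n.
have [G [[HG1 HG2] [l [u1 u2 u3]]]] := Hdi n.
apply: (@BMgen (root_part p k M1 n) (root_part p k M2 n) n s l) => //.
- exact: root_part_sf.
- exact: root_part_sf.
- by move=> x Hx; split; [apply: Hk1|apply: sfX].
- by move=> x [Hx Kx]; split => //; apply: H12.
- by move=> x [].
- have <- : G = (fun z => (z \in l) : Prop) by apply: setE => z; exact: u2.
  exact: HG1.
Qed.

End Final.

Section Span.
Variable F : fieldType.
Variable E : F -> Prop.
Hypothesis HE : is_subfield E.

Definition subspace (V : F -> Prop) :=
  [/\ V 0, (forall u v, V u -> V v -> V (u + v)) & (forall c v, E c -> V v -> V (c * v))].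

Definition span (A : F -> Prop) : F -> Prop :=
  fun x => forall V, subspace V -> psubset A V -> V x.

Lemma span_sub A : subspace (span A).
Proof.
split.
- by move=> V [] .
- by move=> u v Hu Hv V HV HA; case: (HV) => _ H _; apply: H; [apply: Hu|apply: Hv].
- by move=> c v Hc Hv V HV HA; case: (HV) => _ _ H; apply: H => //; apply: Hv.
Qed.

Lemma span_ext A x : A x -> span A x.
Proof. by move=> Hx V _ H; apply: H. Qed.

Lemma span_mono A B : (forall x, A x -> span B x) -> forall x, span A x -> span B x.
Proof. by move=> H x Hx; apply: Hx; [apply: span_sub|]. Qed.

Lemma span_exch (A : F -> Prop) x y : True ->
  span (fun z => A z \/ z = x) y -> ~ span A y -> span (fun z => A z \/ z = y) x.
Proof.
move=> _ Hy Hny.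
set W := fun z => exists a c, [/\ span A a, E c & z = a + c * x].
have HW : subspace W.
  split.
  - exists 0, 0; split; [by case: (span_sub A)|exact: (sf0 HE)|by rewrite mul0r addr0].
  - move=> u v [a [c [Ha Hc ->]]] [a' [c' [Ha' Hc' ->]]].
    exists (a + a'), (c + c'); split; [by case: (span_sub A) => _ H _; apply: H|exact: (sfD HE)|].
    by rewrite mulrDl addrACA.
  - move=> c' v Hc' [a [c [Ha Hc ->]]].
    exists (c' * a), (c' * c); split; [by case: (span_sub A) => _ _ H; apply: H|exact: (sfM HE)|].
    by rewrite mulrDr mulrA.
have [a [c [Ha Hc Ey]]] : W y.
  apply: Hy => // z [Hz|->].
    by exists z, 0; split => //; [apply: span_ext|apply: (sf0 HE)|rewrite mul0r addr0].
  exists 0, 1; split; [by case: (span_sub A)|exact: (sf1 HE)|by rewrite mul1r add0r].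
have c0 : c != 0.
  by apply/eqP => c0; apply: Hny; rewrite Ey c0 mul0r addr0.
have -> : x = c^-1 * y + (- c^-1) * a.
  by rewrite Ey mulrDr mulrA mulVf // mul1r mulNr addrC addKr.
case: (span_sub (fun z => A z \/ z = y)) => _ HD HM.
apply: HD; apply: HM.
- exact: (sfV HE).
- by apply: span_ext; right.
- by apply: (sfN HE) => //; apply: (sfV HE).
- by move: Ha; apply: span_mono => z Hz; apply: span_ext; left.
Qed.

Lemma span_adjoin A : psubset (span A) (adjoin E A).
Proof.
move=> x Hx; apply: Hx; last by move=> z; apply: adjoin_G.
have H := adjoin_sf E A.
split; [exact: (sf0 H)|by move=> u v; apply: (sfD H)|].
by move=> c v Hc Hv; apply: (sfM H) => //; apply: adjoin_k.
Qed.

Lemma span_steinitz a G : indep span (fun _ => False) a ->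
  (forall x, List.In x a -> span (fun z => List.In z G) x) -> (size a <= size G)%N.
Proof.
move=> Ha H1; apply: (steinitz (P := fun _ => True) span_ext span_mono span_exch Ha) => //.
move=> x Hx; move: (H1 x Hx); apply: span_mono => z Hz; apply: span_ext; right; done.
Qed.

End Span.

Section FinExp.
Variable F : fieldType.
Variable p : nat.
Hypothesis Hp : prime p.
Hypothesis Hc : p \in [pchar F].

Lemma powpow (x : F) a b : (x ^+ (p ^ a)) ^+ (p ^ b) = x ^+ (p ^ (a + b)).
Proof. by rewrite -exprM -expnD. Qed.

Lemma fin_exp (K1 K2 : F -> Prop) (b : seq F) :
  is_subfield K1 -> is_subfield K2 -> psubset K1 K2 ->
  (forall x, K2 x -> exists n, K1 (x ^+ (p ^ n))) ->
  (forall x, K2 x -> span K1 (fun z => List.In z b) x) ->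
  forall x, K2 x -> K1 (x ^+ (p ^ size b)).
Proof.
move=> HK1 HK2 H12 Hpi Hsp x Hx.
have exn : exists n, `[< K1 (x ^+ (p ^ n)) >] by have [n Hn] := Hpi x Hx; exists n; apply/asboolP.
case: (ex_minnP exn) => j /asboolP Hj Hmin.
have notK : forall i, (i < j)%N -> ~ K1 (x ^+ (p ^ i)).
  by move=> i Hi Hn; have := Hmin i (introT (asboolP _) Hn); rewrite leqNgt Hi.
have claim : forall i, (i <= j)%N -> exists a, [/\ size a = i.+1,
    indep (span K1) (fun _ => False) a, (forall z, List.In z a -> K2 z) &
    (forall z, List.In z a -> adjoin K1 (fun w => w = x ^+ (p ^ (j - i))) z)].
  elim=> [|i IH] Hi.
    exists [:: 1]; split => //=.
    - split => //; move=> H1.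
      have HV : subspace K1 (fun z : F => z = 0).
        split => //; first by move=> u v -> ->; rewrite addr0.
        by move=> c v _ ->; rewrite mulr0.
      by move: (H1 _ HV (fun _ (f : False) => match f with end)) => /eqP; rewrite oner_eq0.
    - by move=> z [<-|[]]; apply: sf1.
    - by move=> z [<-|[]]; apply: (sf1 (adjoin_sf _ _)).
  have [a [Hs Ha HaK HaA]] := IH (ltnW Hi).
  set z := x ^+ (p ^ (j - i.+1)).
  have zp : z ^+ p = x ^+ (p ^ (j - i)).
    rewrite /z -{2}(expn1 p) powpow addn1 subnSK //.
  have Hnz : ~ adjoin K1 (fun w => w = z ^+ p) z.
    move=> Hz; have := frob_adjoin_img Hp Hc (m := i) Hz.
    rewrite /z powpow.
    have -> : (j - i.+1 + i = j.-1)%N by lia.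
    move=> H; apply: (notK j.-1); first by case: (j) Hi.
    move: H; apply: adjoin_min => //.
      by apply: fimg_sub.
    move=> w [v [-> ->]]; rewrite zp powpow subnK //; exact: ltnW.
  exists (a ++ [:: z]); split.
  - by rewrite size_cat Hs addn1.
  - apply/indep_cat; split => // Hz; apply: Hnz; rewrite zp.
    have := span_adjoin Hz; apply: adjoin_min; first exact: adjoin_sf.
      by move=> w; apply: adjoin_k.
    by move=> w [[]|/HaA].
  - by move=> w /List.in_app_iff [/HaK|[<-|[]]] //; apply: sfX.
  - move=> w /List.in_app_iff [/HaA|[<-|[]]]; last by apply: adjoin_G.
    rewrite -zp; apply: adjoin_min; first exact: adjoin_sf.
      by move=> v; apply: adjoin_k.
    by move=> v ->; apply: (sfX (adjoin_sf _ _)); apply: adjoin_G.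
have [a [Hs Ha HaK _]] := claim j (leqnn j).
have Hj' : (j < size b)%N.
  rewrite -Hs; apply: (span_steinitz HK1 Ha) => z Hz; exact: (Hsp _ (HaK _ Hz)).
have -> : (size b = j + (size b - j))%N by rewrite subnKC // ltnW.
by rewrite -powpow; apply: sfX.
Qed.

End FinExp.

Section Main.
Variable F : fieldType.
Variable p : nat.
Hypothesis Hp : prime p.
Hypothesis Hc : p \in [pchar F].
Variable k : F -> Prop.
Hypothesis Hk : is_subfield k.

Lemma di_lt_k s : (1 <= s)%N -> di_lt p k k s.
Proof.
move=> Hs n; exists (fun _ => False); split; last by exists [::].
split => // x; rewrite adjoin_self // /root_part; split; first by case.
by move=> Hx; split => //; apply: sfX.
Qed.

Lemma is_o_exists (L : F -> Prop) s n : (1 <= s)%N ->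
  (forall x, L x -> k (x ^+ (p ^ n))) -> exists o, is_o p k L s o.
Proof.
move=> Hs HL.
have exn : exists m, `[< di_lt p k (frob_adjoin p k L m) s >].
  exists n; apply/asboolP.
  have -> : frob_adjoin p k L n = k.
    by apply: adjoin_self => // y [x [Hx ->]]; apply: HL.
  exact: di_lt_k.
case: (ex_minnP exn) => m /asboolP Hm Hmin.
exists m; split => // m' H'; apply: Hmin; exact/asboolP.
Qed.

Lemma frob_adjoin_mono (L1 L2 : F -> Prop) m1 m2 :
  (forall x, L2 x -> exists y, L1 y /\ x ^+ (p ^ m2) = y ^+ (p ^ m1)) ->
  psubset (frob_adjoin p k L2 m2) (frob_adjoin p k L1 m1).
Proof.
move=> H; apply: adjoin_mono; first by move=> z; apply: adjoin_k.
move=> z [x [Hx ->]]; have [y [Hy ->]] := H x Hx; apply: adjoin_G; by exists y.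
Qed.

Lemma o_le (L1 L2 : F -> Prop) s o1 o2 e :
  is_o p k L1 s o1 -> is_o p k L2 s o2 ->
  (forall x, L2 x -> exists y, L1 y /\ x ^+ (p ^ e) = y) -> (o2 <= o1 + e)%N.
Proof.
move=> [H1 _] [_ H2] H; apply: H2.
apply: (di_mono Hp Hc Hk _ _ _ _ H1).
- exact: adjoin_sf.
- exact: adjoin_sf.
- by move=> z; apply: adjoin_k.
apply: frob_adjoin_mono => x /H [y [Hy Ey]]; exists y; split => //.
by rewrite -Ey powpow addnC.
Qed.

Lemma root_part_sub (K1 K2 : F -> Prop) n : psubset K1 K2 ->
  psubset (root_part p k K1 n) (root_part p k K2 n).
Proof. by move=> H x [Hx Kx]; split => //; apply: H. Qed.

Lemma U_le (K1 K2 : F -> Prop) s n u1 u2 e :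
  is_U p k K1 s n u1 -> is_U p k K2 s n u2 ->
  (forall x, root_part p k K2 n x -> exists y, root_part p k K1 n y /\ x ^+ (p ^ e) = y) ->
  u1 - e%:Z <= u2.
Proof.
move=> [o1 [Ho1 ->]] [o2 [Ho2 ->]] H.
have := o_le Ho1 Ho2 H => Hle.
lia.
Qed.

Lemma U_exists (K : F -> Prop) s n : (1 <= s)%N -> exists u, is_U p k K s n u.
Proof.
move=> Hs; have [o Ho] := is_o_exists (L := root_part p k K n) Hs (fun x H => proj2 H).
by exists (n%:Z - o%:Z), o.
Qed.


End Main.


Unset Implicit Arguments.
Theorem mainTheorem2 (Omega : closedFieldType) (p : nat) (k K1 K2 : Omega -> Prop) :
  prime p -> p \in [pchar Omega] ->
  is_subfield k ->
  (forall x : Omega, exists q : {poly Omega},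
      [/\ q != 0, (forall i, k q`_i) & root q x]) ->
  is_subfield K1 -> is_subfield K2 ->
  psubset k K1 -> psubset K1 K2 ->
  purely_insep p k K2 ->
  q_finite p k K1 -> ~ bounded_exponent p k K1 ->
  q_finite p k K2 -> ~ bounded_exponent p k K2 ->
  [/\ (forall (s n : nat) (u1 u2 : int), (1 <= s)%N ->
          is_U p k K1 s n u1 -> is_U p k K2 s n u2 -> u2 <= u1),
      (forall t1 t2, is_Ilqm p k K1 t1 -> is_Ilqm p k K2 t2 -> (t1 <= t2)%N) &
      (finite_ext K1 K2 ->
         forall t1 t2, is_Ilqm p k K1 t1 -> is_Ilqm p k K2 t2 -> t1 = t2)].
Proof.
move=> Hp Hc Hk _ HK1 HK2 Hk1 H12 Hpi _ _ _ _.
have part1 : forall (s n : nat) (u1 u2 : int), (1 <= s)%N ->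
    is_U p k K1 s n u1 -> is_U p k K2 s n u2 -> u2 <= u1.
  move=> s n u1 u2 _ Hu1 Hu2.
  have := U_le Hp Hc Hk (e := 0) Hu2 Hu1; rewrite subr0; apply.
  by move=> x Hx; exists x; split; [apply: root_part_sub Hx|rewrite expn0 expr1].
have part2 : forall t1 t2, is_Ilqm p k K1 t1 -> is_Ilqm p k K2 t2 -> (t1 <= t2)%N.
  move=> t1 t2 [_ _ Hmin1] [Ht2 Hun2 _]; apply: Hmin1 => // B.
  have [j [u2 [Hu2 HB]]] := Hun2 B.
  have [u1 Hu1] := U_exists p Hk K1 j Ht2.
  exists j, u1; split => //; apply: lt_le_trans HB _; exact: part1 Hu1 Hu2.
split => // Hfin t1 t2 HI1 HI2.
apply/eqP; rewrite eqn_leq part2 //=.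
have [b Hb] := Hfin.
have Hsp : forall x, K2 x -> span K1 (fun z => List.In z b) x.
  move=> x /Hb [c [Hs Hc' ->]].
  case: (span_sub K1 (fun z => List.In z b)) => H0 HD HM.
  apply: (big_ind (span K1 (fun z => List.In z b))) => // i _.
  apply: HM; first by apply: Hc'; rewrite Hs.
  apply: span_ext; apply/InE; apply: mem_nth.
  by have := ltn_ord i.
have Hpi' : forall x, K2 x -> exists n, K1 (x ^+ (p ^ n)).
  by move=> x /Hpi [n Hn]; exists n; apply: Hk1.
have He := fin_exp Hp Hc HK1 HK2 H12 Hpi' Hsp.
set e := size b in He.
case: HI1 => [Ht1 Hun1 _]; case: HI2 => [_ _ Hmin2].
apply: Hmin2 => // B.
have [j [u1 [Hu1 HB]]] := Hun1 (B + e%:Z).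
have [u2 Hu2] := U_exists p Hk K2 j Ht1.
exists j, u2; split => //.
have := U_le Hp Hc Hk (e := e) Hu1 Hu2.
have H : (forall x, root_part p k K2 j x -> exists y, root_part p k K1 j y /\ x ^+ (p ^ e) = y).
  move=> x [Hx Kx]; exists (x ^+ (p ^ e)); split => //; split; first by apply: He.
  by rewrite powpow addnC -powpow; apply: sfX.
move=> /(_ H) Hle; apply: lt_le_trans Hle.
by rewrite ltrBrDr.
Qed.
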